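(* Let $G=(V,E)$ be an unweighted graph with $n$ vertices, and let $s,t\in V$. Then $$ B_{st}^{2}\leq n^{3}. $$
   Context: $L=D-A$ is the Laplacian of the unweighted graph $G$, $L^{+}$ its Moore–Penrose pseudoinverse, $L^{2+}=(L^+)^2$, and $1_v$ the indicator vector of vertex $v$. The biharmonic distance is $B_{st}=\sqrt{(1_s-1_t)^{T}L^{2+}(1_s-1_t)}$. *)

(* Defs.v *)
From HB Require Import structures.
From mathcomp Require Import all_boot all_order all_algebra.
From mathcomp Require Import reals.
From Stdlib Require Import ClassicalEpsilon.
Set Implicit Arguments. Unset Strict Implicit. Unset Printing Implicit Defensive.
Import Order.TTheory GRing.Theory Num.Theory.
Local Open Scope ring_scope.

Definition simple_graph (n : nat) (e : rel 'I_n) : Prop :=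
  (forall i j, e i j = e j i) /\ (forall i, e i i = false).

Definition adjmx (R : realType) (n : nat) (e : rel 'I_n) : 'M[R]_n :=
  \matrix_(i, j) (if e i j then 1 else 0).

Definition degmx (R : realType) (n : nat) (e : rel 'I_n) : 'M[R]_n :=
  \matrix_(i, j) (if i == j then (#|[set k | e i k]|)%:R else 0).

Definition laplacian (R : realType) (n : nat) (e : rel 'I_n) : 'M[R]_n :=
  degmx R e - adjmx R e.

Definition is_MP_pinv (R : realType) (m n : nat)
    (A : 'M[R]_(m, n)) (X : 'M[R]_(n, m)) : Prop :=
  [/\ A *m X *m A = A, X *m A *m X = X,
      (A *m X)^T = A *m X & (X *m A)^T = X *m A].

(* The Moore--Penrose pseudoinverse (chosen by classical description;
   it exists and is unique for real matrices). *)
Definition MP_pinv (R : realType) (m n : nat) (A : 'M[R]_(m, n)) : 'M[R]_(n, m) :=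
  epsilon (inhabits 0) (is_MP_pinv A).

Definition indic (R : realType) (n : nat) (v : 'I_n) : 'cV[R]_n :=
  \col_i (if i == v then 1 else 0).

Definition biharmonic_sq (R : realType) (n : nat) (e : rel 'I_n) (s t : 'I_n) : R :=
  let d := indic R s - indic R t in
  let Lp := MP_pinv (laplacian R e) in
  (d^T *m (Lp *m Lp) *m d) 0 0.

(* Main.v *)
Require Import Defs.
From HB Require Import structures.
From mathcomp Require Import all_boot all_order all_algebra.
From mathcomp Require Import reals.
From Stdlib Require Import ClassicalEpsilon.
Set Implicit Arguments. Unset Strict Implicit. Unset Printing Implicit Defensive.
Import Order.TTheory GRing.Theory Num.Theory.
Local Open Scope ring_scope.
From mathcomp Require Import lra.
Lemma lap_mul (R : realType) (n k : nat) (e : rel 'I_n) (B : 'M[R]_(n, k)) a j :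
  (laplacian R e *m B) a j = \sum_b (if e a b then B a j - B b j else 0).
Proof.
rewrite mxE.
under eq_bigr => b _ do rewrite !mxE mulrBl.
rewrite sumrB.
have -> : \sum_b ((if a == b then (#|[set k0 | e a k0]|)%:R else 0) * B b j)
   = (#|[set k0 | e a k0]|)%:R * B a j.
  rewrite (bigD1 a) //= eqxx big1 ?addr0 // => b /negbTE; rewrite eq_sym => ->.
  by rewrite mul0r.
have -> : \sum_b (if e a b then B a j - B b j else 0)
   = \sum_b (if e a b then B a j else 0) - \sum_b ((if e a b then 1 else 0) * B b j).
  rewrite -sumrB; apply: eq_bigr => b _; case: (e a b); rewrite ?mul1r ?mul0r ?subr0 //.
congr (_ - _).
rewrite -big_mkcond /= sumr_const cardsE.
by rewrite mulr_natl.
Qed.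
Lemma MP_unique (R : realType) (m n : nat) (A : 'M[R]_(m, n)) X Y :
  is_MP_pinv A X -> is_MP_pinv A Y -> X = Y.
Proof.
case=> [AXA XAX AXs XAs] [AYA YAY AYs YAs].
have At : A^T = A^T *m Y^T *m A^T by rewrite -!trmx_mul mulmxA AYA.
have AtX : A^T = A^T *m X^T *m A^T by rewrite -!trmx_mul mulmxA AXA.
have hX : X = X *m A *m Y.
  have h1 : X = X *m (X^T *m A^T) by rewrite -trmx_mul AXs mulmxA XAX.
  have h2 : X = X *m (X^T *m A^T) *m (Y^T *m A^T).
    by rewrite {1}h1 {1}At !mulmxA.
  by rewrite {1}h2 -!trmx_mul AXs AYs !mulmxA XAX.
have hY : Y = X *m A *m Y.
  have h1 : Y = (A^T *m Y^T) *m Y by rewrite -trmx_mul YAs YAY.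
  have h2 : Y = (A^T *m X^T) *m (A^T *m Y^T) *m Y.
    by rewrite {1}h1 {1}AtX !mulmxA.
  by rewrite {1}h2 -(trmx_mul X A) -(trmx_mul Y A) XAs YAs -!mulmxA (mulmxA Y A Y) YAY !mulmxA.
by rewrite hY -hX.
Qed.
Definition comp (n : nat) (e : rel 'I_n) (a : 'I_n) : {set 'I_n} := [set k | connect e a k].
Definition Pmx (R : realType) (n : nat) (e : rel 'I_n) : 'M[R]_n :=
  \matrix_(a, j) (if connect e a j then (#|comp e a|%:R)^-1 else 0).

Lemma comp_eq n (e : rel 'I_n) a b : symmetric e -> connect e a b -> comp e a = comp e b.
Proof.
move=> hs hab; apply/setP => k; rewrite !inE.
exact: (same_connect (sym_connect_sym hs) hab).
Qed.

Lemma conn_sym n (e : rel 'I_n) a b : symmetric e -> connect e a b = connect e b a.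
Proof. by move=> hs; apply: (sym_connect_sym hs). Qed.

Lemma card_comp_gt0 n (e : rel 'I_n) a : (0 < #|comp e a|)%N.
Proof. by apply/card_gt0P; exists a; rewrite inE connect0. Qed.

Lemma Pmx_conn (R : realType) n (e : rel 'I_n) a b j : symmetric e -> connect e a b ->
  Pmx R e a j = Pmx R e b j.
Proof.
move=> hs hab; rewrite !mxE (comp_eq hs hab).
by rewrite (same_connect (sym_connect_sym hs) hab).
Qed.

Lemma Pmx_tr (R : realType) n (e : rel 'I_n) : symmetric e -> (Pmx R e)^T = Pmx R e.
Proof.
move=> hs; apply/matrixP => a j; rewrite mxE.
case h : (connect e a j); last by rewrite !mxE h (conn_sym _ _ hs) h.
by rewrite (Pmx_conn _ _ hs h) !mxE connect0 (conn_sym _ _ hs) h.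
Qed.

Lemma Pmx_idem (R : realType) n (e : rel 'I_n) : symmetric e -> Pmx R e *m Pmx R e = Pmx R e.
Proof.
move=> hs; apply/matrixP => a j; rewrite mxE.
transitivity (\sum_(b in comp e a) (#|comp e a|%:R)^-1 * Pmx R e a j).
  rewrite [RHS]big_mkcond /=; apply: eq_bigr => b _; rewrite inE.
  case h : (connect e a b); first by rewrite -(Pmx_conn _ j hs h) [Pmx R e a b]mxE h.
  by rewrite [Pmx R e a b]mxE h mul0r.
have hc : (#|comp e a|%:R : R) != 0 by rewrite pnatr_eq0 -lt0n card_comp_gt0.
by rewrite sumr_const -mulrnAl -mulr_natr mulVf // mul1r.
Qed.

Lemma lap_P (R : realType) n (e : rel 'I_n) : symmetric e -> laplacian R e *m Pmx R e = 0.
Proof.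
move=> hs; apply/matrixP => a j; rewrite lap_mul [RHS]mxE; apply: big1 => b _.
case h : (e a b) => //.
by rewrite (Pmx_conn _ _ hs (connect1 h)) subrr.
Qed.

Lemma lap_tr (R : realType) n (e : rel 'I_n) : symmetric e -> (laplacian R e)^T = laplacian R e.
Proof.
move=> hs; apply/matrixP => a j; rewrite !mxE hs eq_sym.
by case: eqP => // ->.
Qed.
Lemma path_closed n (e : rel 'I_n) (S : {set 'I_n}) :
  (forall a b, a \in S -> e a b -> b \in S) ->
  forall p x, x \in S -> path e x p -> last x p \in S.
Proof.
move=> hS; elim => [//|y p IH] x hx /= /andP [hxy hp].
exact: (IH y (hS _ _ hx hxy) hp).
Qed.

Lemma antisym_sum (R : realType) n (S : {set 'I_n}) (h : 'I_n -> 'I_n -> R) :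
  (forall a b, h b a = - h a b) -> \sum_(a in S) \sum_(b in S) h a b = 0.
Proof.
move=> hh.
have : \sum_(a in S) \sum_(b in S) h a b = - \sum_(a in S) \sum_(b in S) h a b.
  rewrite [LHS]exchange_big /= -sumrN; apply: eq_bigr => a _.
  rewrite -sumrN; apply: eq_bigr => b _; exact: hh.
set T := \sum_(a in S) _ => hT; lra.
Qed.

Lemma level (R : realType) n (e : rel 'I_n) (hs : symmetric e) (z : 'cV[R]_n) (c : R) :
  0 <= c ->
  (forall r (S : {set 'I_n}), (forall a, a \in S -> connect e r a) ->
      \sum_(a in S) (laplacian R e *m z) a 0 <= c) ->
  forall i j, connect e i j ->
    z j 0 - z i 0 <= c * (#|[set k | connect e i k & z i 0 < z k 0]|)%:R.
Proof.
move=> c0 H.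
set Sx := fun x => [set k | connect e x k & z x 0 < z k 0].
suff: forall N i, (#|Sx i| < N)%N -> forall j, connect e i j ->
         z j 0 - z i 0 <= c * (#|Sx i|)%:R by move=> hN i j; exact: hN.
elim => [//|N IH] i hi j hij.
case: (leP (z j 0) (z i 0)) => hji.
  apply: (@le_trans _ _ 0); first by rewrite subr_le0.
  by apply: mulr_ge0.
set S := Sx i.
have jS : j \in S by rewrite inE hij hji.
have iS : i \notin S by rewrite inE ltxx andbF.
have Sconn : forall a, a \in S -> connect e i a by move=> a; rewrite inE => /andP [].
pose h a b := if e a b then z a 0 - z b 0 else 0.
have hflow : \sum_(a in S) \sum_(b in ~: S) h a b <= c.
  have := H i S Sconn.
  have -> : \sum_(a in S) (laplacian R e *m z) a 0
       = \sum_(a in S) \sum_(b in S) h a b + \sum_(a in S) \sum_(b in ~: S) h a b.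
    rewrite -big_split /=; apply: eq_bigr => a _.
    rewrite lap_mul (bigID (fun b => b \in S)) /=.
    rewrite /h; congr (_ + _); apply: eq_bigl => b; by rewrite in_setC.
  rewrite antisym_sum ?add0r // => a b.
  by rewrite /h hs; case: (e a b) => //; rewrite ?opprB ?oppr0.
have hpos : forall a b, a \in S -> b \in ~: S -> 0 <= h a b.
  move=> a b aS; rewrite inE /h => bS; case eab : (e a b) => //.
  have ib : connect e i b := connect_trans (Sconn a aS) (connect1 eab).
  move: bS aS; rewrite !inE ib /= -leNgt => hb /andP [_ ha].
  rewrite subr_ge0; apply: ltW; exact: le_lt_trans hb ha.
case: (boolP [exists a, exists b, [&& a \in S, b \notin S & e a b]]); last first.
  move=> /negP hno; exfalso.
  have hcl : forall a b, a \in S -> e a b -> b \in S.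
    move=> a b aS eab; apply/negPn/negP => bS; apply: hno.
    by apply/existsP; exists a; apply/existsP; exists b; rewrite aS bS eab.
  have : connect e j i by rewrite (conn_sym _ _ hs).
  move/connectP => [p hp hil].
  by move: (path_closed hcl jS hp); rewrite -hil (negbTE iS).
move=> /existsP [a /existsP [b /and3P [aS bS eab]]].
have hab : z a 0 - z b 0 <= c.
  apply: le_trans hflow.
  have -> : z a 0 - z b 0 = h a b by rewrite /h eab.
  rewrite (bigD1 a aS) /= (bigD1 b) /=; last by rewrite inE.
  rewrite -addrA lerDl; apply: addr_ge0.
    by apply: sumr_ge0 => y /andP [yS _]; exact: hpos.
  apply: sumr_ge0 => x /andP [xS _]; apply: sumr_ge0 => y yS; exact: hpos.
have hbi : z b 0 <= z i 0.
  have ib : connect e i b := connect_trans (Sconn a aS) (connect1 eab).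
  by move: bS; rewrite inE ib /= -leNgt.
have hprop : Sx a \proper S.
  apply/properP; split; last by exists a => //; rewrite inE ltxx andbF.
  apply/subsetP => k; rewrite !inE => /andP [hak hzk].
  move: aS; rewrite inE => /andP [hia hza].
  by rewrite (connect_trans hia hak) (lt_trans hza hzk).
have hcard := proper_card hprop.
have haj : connect e a j.
  by apply: connect_trans _ hij; rewrite (conn_sym _ _ hs) Sconn.
have IHa := IH a (leq_trans hcard hi) j haj.
have hn : (#|Sx a|%:R + 1 <= (#|S|%:R : R)).
  by rewrite natr1 ler_nat.
have hc : c * #|Sx a|%:R + c <= c * #|S|%:R.
  by rewrite -{2}(mulr1 c) -mulrDr ler_wpM2l.
lra.
Qed.

Lemma Pmx_mul (R : realType) n (e : rel 'I_n) (z : 'cV[R]_n) a :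
  (Pmx R e *m z) a 0 = (#|comp e a|%:R)^-1 * \sum_(j in comp e a) z j 0.
Proof.
rewrite mxE big_distrr /= [RHS]big_mkcond /=; apply: eq_bigr => j _.
by rewrite mxE inE; case: (connect e a j); rewrite ?mul0r.
Qed.

Lemma Pmx_const (R : realType) n (e : rel 'I_n) (z : 'cV[R]_n) a :
  (forall j, connect e a j -> z j 0 = z a 0) -> (Pmx R e *m z) a 0 = z a 0.
Proof.
move=> hz; rewrite Pmx_mul.
rewrite (eq_bigr (fun _ => z a 0)); last by move=> j; rewrite inE => /hz.
have hc : (#|comp e a|%:R : R) != 0 by rewrite pnatr_eq0 -lt0n card_comp_gt0.
by rewrite sumr_const mulrnAr -mulrnAl -mulr_natr mulVf // mul1r.
Qed.

Lemma P_lap (R : realType) n (e : rel 'I_n) : symmetric e -> Pmx R e *m laplacian R e = 0.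
Proof.
move=> hs; rewrite -{1}(Pmx_tr R hs) -{1}(lap_tr R hs) -trmx_mul lap_P //.
by apply/matrixP => a b; rewrite !mxE.
Qed.

Lemma M_unit (R : realType) n (e : rel 'I_n) : symmetric e ->
  (laplacian R e + Pmx R e) \in unitmx.
Proof.
move=> hs; rewrite -row_free_unit; apply: inj_row_free => v hv.
set L := laplacian R e; set P := Pmx R e.
have MT : (L + P)^T = L + P by rewrite linearD /= lap_tr // Pmx_tr.
set x := v^T.
have Mx : (L + P) *m x = 0 by rewrite -MT -trmx_mul hv; apply/matrixP => a b; rewrite !mxE.
have PM : P *m (L + P) = P by rewrite mulmxDr P_lap // Pmx_idem // add0r.
have Px : P *m x = 0 by rewrite -PM -mulmxA Mx mulmx0.
have Lx : L *m x = 0.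
  by move: Mx; rewrite mulmxDl Px addr0.
have hc : forall i j, connect e i j -> x j 0 - x i 0 <= 0.
  move=> i j hij; rewrite -(mul0r (#|[set k | connect e i k & x i 0 < x k 0]|%:R : R)).
  apply: (level hs (le_refl 0)) => // r S _.
  by rewrite Lx big1 // => a _; rewrite mxE.
have hconst : forall i j, connect e i j -> x j 0 = x i 0.
  move=> i j hij; apply/le_anti; rewrite -subr_le0 hc //= -subr_le0 hc //.
  by rewrite (conn_sym _ _ hs).
have x0 : x = 0.
  apply/matrixP => a b; rewrite (ord1 b) [RHS]mxE.
  rewrite -(Pmx_const (hconst a)) -/P Px mxE //.
by rewrite -(trmxK v) -/x x0; apply/matrixP => a b; rewrite !mxE.
Qed.

Lemma ybound (R : realType) n (e : rel 'I_n) (hs : symmetric e) (z : 'cV[R]_n) :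
  (forall r (S : {set 'I_n}), (forall a, a \in S -> connect e r a) ->
      \sum_(a in S) (laplacian R e *m z) a 0 <= 1) ->
  (forall a, \sum_(j in comp e a) z j 0 = 0) ->
  forall a, - z a 0 <= n%:R.
Proof.
move=> HS Hm a.
have h : forall j, j \in comp e a -> z j 0 - z a 0 <= n%:R.
  move=> j; rewrite inE => haj.
  apply: le_trans (level hs ler01 HS haj) _.
  rewrite mul1r ler_nat.
  apply: leq_trans (max_card _) _. by rewrite card_ord.
have : \sum_(j in comp e a) (z j 0 - z a 0) <= \sum_(j in comp e a) (n%:R : R) by apply: ler_sum.
rewrite sumrB Hm sumr_const sub0r sumr_const.
set c := #|comp e a|.
have cp : (0 < c%:R :> R) by rewrite ltr0n card_comp_gt0.
rewrite -[z a 0 *+ c]mulr_natr -[n%:R *+ c]mulr_natr -mulNr.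
by rewrite ler_pM2r.
Qed.
Lemma sum_ind (R : realType) n (A : {set 'I_n}) (s : 'I_n) :
  \sum_(a in A) (if a == s then 1 else 0 : R) = if s \in A then 1 else 0.
Proof.
case: ifP => hs.
  rewrite (bigD1 s) //= eqxx big1 ?addr0 // => a /andP [_ /negbTE ->] //.
by apply: big1 => a ha; case: eqP => // eas; rewrite -eas ha in hs.
Qed.

Lemma f_bound (R : realType) n (e : rel 'I_n) (hs : symmetric e) (s t r : 'I_n)
  (S : {set 'I_n}) : (forall a, a \in S -> connect e r a) ->
  -1 <= \sum_(a in S) ((1%:M - Pmx R e) *m (indic R s - indic R t)) a 0 <= 1.
Proof.
move=> hS; set f := (1%:M - Pmx R e) *m _.
set d := indic R s - indic R t.
have hd : forall j, d j 0 = (if j == s then 1 else 0) - (if j == t then 1 else 0).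
  by move=> j; rewrite !mxE.
have hf : forall a, a \in S -> f a 0 = d a 0 - (#|comp e r|%:R)^-1 * \sum_(j in comp e r) d j 0.
  move=> a aS; rewrite /f mulmxBl mul1mx mxE.
  have -> : forall M : 'cV[R]_n, (- M) a 0 = - M a 0 by move=> M; rewrite mxE.
  rewrite Pmx_mul.
  by rewrite -(comp_eq hs (hS a aS)).
rewrite (eq_bigr _ hf) sumrB sumr_const.
under eq_bigr do rewrite hd.
have hsig : \sum_(j in comp e r) d j 0 = (if s \in comp e r then 1 else 0) - (if t \in comp e r then 1 else 0).
  by under eq_bigr do rewrite hd; rewrite sumrB !sum_ind.
rewrite hsig.
rewrite !sumrB !sum_ind.
have hsub : (#|S| <= #|comp e r|)%N.
  apply: subset_leq_card; apply/subsetP => a aS; rewrite inE; exact: hS.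
have cp : (0 < #|comp e r|%:R :> R) by rewrite ltr0n card_comp_gt0.
set q := (#|comp e r|%:R)^-1 * (#|S|%:R : R).
have q0 : 0 <= q by rewrite mulr_ge0 // invr_ge0 ltW.
have q1 : q <= 1.
  by rewrite /q ler_pdivrMl // mulr1 ler_nat.
have -> : ((#|comp e r|%:R)^-1 * ((if s \in comp e r then 1 else 0) - (if t \in comp e r then 1 else 0))) *+ #|S|
   = q * ((if s \in comp e r then 1 else 0) - (if t \in comp e r then 1 else 0)).
  by rewrite -mulr_natr /q mulrAC.
have sS : s \in S -> s \in comp e r by move=> /hS; rewrite inE.
have tS : t \in S -> t \in comp e r by move=> /hS; rewrite inE.
move: sS tS.
case: (s \in S); case: (t \in S); case: (s \in comp e r); case: (t \in comp e r) => /= hsS htS;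
  (try by move: (hsS isT)); (try by move: (htS isT)); apply/andP; split; lra.
Qed.

Definition X0 (R : realType) n (e : rel 'I_n) : 'M[R]_n :=
  invmx (laplacian R e + Pmx R e) - Pmx R e.

Lemma PMi (R : realType) n (e : rel 'I_n) : symmetric e ->
  Pmx R e *m invmx (laplacian R e + Pmx R e) = Pmx R e /\
  invmx (laplacian R e + Pmx R e) *m Pmx R e = Pmx R e.
Proof.
move=> hs; have hu := M_unit R hs.
have PM : Pmx R e *m (laplacian R e + Pmx R e) = Pmx R e
  by rewrite mulmxDr P_lap // Pmx_idem // add0r.
have MP : (laplacian R e + Pmx R e) *m Pmx R e = Pmx R e
  by rewrite mulmxDl lap_P // Pmx_idem // add0r.
split.
  by rewrite -[X in X *m _ = _]PM -mulmxA mulmxV // mulmx1.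
by rewrite -[X in _ *m X = _]MP mulmxA mulVmx // mul1mx.
Qed.

Lemma LX0 (R : realType) n (e : rel 'I_n) : symmetric e ->
  laplacian R e *m X0 R e = 1%:M - Pmx R e /\ X0 R e *m laplacian R e = 1%:M - Pmx R e.
Proof.
move=> hs; have hu := M_unit R hs; have [h1 h2] := PMi R hs.
have hL : laplacian R e = (laplacian R e + Pmx R e) - Pmx R e by rewrite addrK.
split.
  rewrite /X0 mulmxBr lap_P // subr0 {1}hL mulmxBl mulmxV // h1 //.
rewrite /X0 mulmxBl P_lap // subr0 {2}hL mulmxBr mulVmx // h2 //.
Qed.

Lemma PX0 (R : realType) n (e : rel 'I_n) : symmetric e -> Pmx R e *m X0 R e = 0.
Proof.
move=> hs; have [h1 h2] := PMi R hs.
by rewrite /X0 mulmxBr h1 Pmx_idem // subrr.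
Qed.

Lemma X0_MP (R : realType) n (e : rel 'I_n) : symmetric e ->
  is_MP_pinv (laplacian R e) (X0 R e).
Proof.
move=> hs; have [h1 h2] := LX0 R hs.
split.
- by rewrite h1 mulmxBl mul1mx P_lap // subr0.
- by rewrite h2 mulmxBl mul1mx PX0 // subr0.
- by rewrite h1 linearB /= trmx1 Pmx_tr.
- by rewrite h2 linearB /= trmx1 Pmx_tr.
Qed.

Lemma X0_tr (R : realType) n (e : rel 'I_n) : symmetric e -> (X0 R e)^T = X0 R e.
Proof.
move=> hs; rewrite /X0 linearB /= trmx_inv linearD /= lap_tr // Pmx_tr //.
Qed.

Unset Implicit Arguments.

Theorem theoremA2 (R : realType) (n : nat) (e : rel 'I_n) (s t : 'I_n) :
  simple_graph e -> biharmonic_sq R e s t <= (n%:R : R) ^+ 3.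
Proof.
case=> hs _.
have hMP := X0_MP R hs.
have hX : MP_pinv (laplacian R e) = X0 R e.
  exact: (MP_unique (epsilon_spec (inhabits 0) (is_MP_pinv (laplacian R e)) (ex_intro _ _ hMP)) hMP).
rewrite /biharmonic_sq; cbv zeta; rewrite hX.
set d := indic R s - indic R t.
set y := X0 R e *m d.
have -> : d^T *m (X0 R e *m X0 R e) *m d = y^T *m y.
  by rewrite /y trmx_mul X0_tr // !mulmxA.
have [h1 _] := LX0 R hs.
have Ly : laplacian R e *m y = (1%:M - Pmx R e) *m d by rewrite /y mulmxA h1.
have Py : Pmx R e *m y = 0 by rewrite /y mulmxA PX0 // mul0mx.
have Hm : forall a, \sum_(j in comp e a) y j 0 = 0.
  move=> a; have := congr1 (fun M : 'cV[R]_n => M a 0) Py; rewrite /= Pmx_mul mxE.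
  have hc : (#|comp e a|%:R : R)^-1 != 0 by rewrite invr_eq0 pnatr_eq0 -lt0n card_comp_gt0.
  by move/eqP; rewrite mulf_eq0 (negbTE hc) /= => /eqP.
clearbody y.
have hy1 : forall a, - y a 0 <= n%:R.
  apply: ybound => // r S hS; rewrite Ly.
  by have /andP [_ ->] := f_bound R hs s t hS.
have hy2 : forall a, y a 0 <= n%:R.
  move=> a; rewrite -(opprK (y a 0)).
  have -> : - y a 0 = (- y) a 0 by rewrite mxE.
  apply: ybound => // [r S hS|b].
    rewrite mulmxN.
    under eq_bigr do rewrite mxE.
    rewrite sumrN Ly lerNl.
    by have /andP [-> _] := f_bound R hs s t hS.
  under eq_bigr do rewrite mxE.
  by rewrite sumrN Hm oppr0.
rewrite mxE.
apply: (@le_trans _ _ (\sum_(a < n) (n%:R * n%:R : R))).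
  apply: ler_sum => a _; rewrite mxE.
  have := hy1 a; have := hy2 a; nra.
rewrite sumr_const card_ord -[(_ * _) *+ n]mulr_natr.
by rewrite !exprS expr0 mulr1 mulrA.
Qed.
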